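(* For every integer $n\ge2$ and every prime power $q$, $$f(n,q)\ge\frac{(q^{n+1}-1)(q^{n-1}-1)}{(q^2-1)^2}.$$
   Context: $f(n,q)$ is the smallest size of a set of lines of $\mathrm{PG}(n,q)$ (the $n$-dimensional projective space over $\mathbb F_q$) such that every plane contains at least one line of the set. *)

(* Defs.v *)
From mathcomp Require Import all_boot all_order all_algebra.
Set Implicit Arguments. Unset Strict Implicit. Unset Printing Implicit Defensive.
Import GRing.Theory.
Local Open Scope ring_scope.

(* Points of PG(n,q) are 1-dim subspaces of F^(n+1) (F a finite field, |F| = q);
   projective k-spaces are (k+1)-dim vector subspaces.  We represent a vector
   subspace by its finite set of vectors. *)
Definition vec (F : finFieldType) (n : nat) := 'rV[F]_(n.+1).

Definition is_subspace (F : finFieldType) (n k : nat) (A : {set vec F n}) : bool :=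
  [exists M : 'M[F]_(k, n.+1), (\rank M == k) && (A == [set v | (v <= M)%MS])].

Definition is_line (F : finFieldType) (n : nat) (A : {set vec F n}) := @is_subspace F n 2%N A.
Definition is_plane (F : finFieldType) (n : nat) (A : {set vec F n}) := @is_subspace F n 3%N A.

Definition covers_planes (F : finFieldType) (n : nat) (L : {set {set vec F n}}) : bool :=
  [forall l in L, is_line l] &&
  [forall P : {set vec F n}, is_plane P ==> [exists l in L, l \subset P]].

Definition all_lines (F : finFieldType) (n : nat) : {set {set vec F n}} :=
  [set l | is_line l].

Definition f (F : finFieldType) (n : nat) : nat :=
  #|[arg min_(L < all_lines F n | covers_planes L) #|L|]|.

(* Main.v *)
Require Import Defs.
From mathcomp Require Import all_boot all_order all_algebra.
From mathcomp Require Import zify ring lra.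
Set Implicit Arguments. Unset Strict Implicit. Unset Printing Implicit Defensive.
Import Order.TTheory GRing.Theory Num.Theory.
Local Open Scope ring_scope.

Section Proj.
Variables (F : finFieldType) (n : nat).
Local Notation V := (vec F n).
Local Notation q := #|F|.

Definition S (U : 'M[F]_(n.+1)) : {set V} := [set v : V | (v <= U)%MS].

Lemma subspaceP (A : {set V}) k :
  reflect (exists U : 'M[F]_(n.+1), \rank U = k /\ A = S U) (is_subspace k A).
Proof.
apply: (iffP existsP) => [[M /andP[/eqP rk /eqP ->]] | [U [rk ->]]].
  exists (<<M>>%MS); split; first by rewrite genmxE.
  by apply/setP => v; rewrite !inE genmxE.
subst k; exists (row_base U); rewrite eq_row_base eqxx /=.
by apply/eqP/setP => v; rewrite !inE eq_row_base.
Qed.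

Lemma card_S (U : 'M[F]_(n.+1)) : #|S U| = (q ^ \rank U)%N.
Proof.
have -> : S U = [set x *m row_base U | x : 'rV[F]_(\rank U)].
  apply/setP => v; rewrite inE; apply/idP/imsetP.
    by rewrite -(eq_row_base U) => /submxP [x ->]; exists x.
  by case=> x _ ->; apply: submx_trans (submxMl _ _) _; rewrite eq_row_base.
by rewrite card_imset ?card_mx ?mul1n //; apply: row_free_inj; apply: row_base_free.
Qed.

Lemma card_V : #|{: V}| = (q ^ n.+1)%N.
Proof. by rewrite card_mx mul1n. Qed.

Lemma subS (U W : 'M[F]_(n.+1)) : (S U \subset S W) = (U <= W)%MS.
Proof.
apply/subsetP/idP => [sUW | sUW v]; last by rewrite !inE => /submx_trans; apply.
apply/row_subP => i; have := sUW (row i U); rewrite !inE row_sub; by apply.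
Qed.

Lemma eqS (U W : 'M[F]_(n.+1)) : (U == W)%MS -> S U = S W.
Proof. by move/eqmxP => eUW; apply/setP => v; rewrite !inE eUW. Qed.

Lemma S0 (U : 'M[F]_(n.+1)) : (0 : V) \in S U.
Proof. by rewrite inE sub0mx. Qed.

Lemma rank_adds_v (U : 'M[F]_(n.+1)) (v : V) : ~~ (v <= U)%MS -> \rank (U + v)%MS = (\rank U).+1.
Proof.
move=> nvU; apply/eqP; rewrite eqn_leq; apply/andP; split.
  rewrite -[(\rank U).+1]addn1; apply: leq_trans (mxrank_adds_leqif U v).1 _.
  by rewrite leq_add2l rank_leq_row.
have [le eq] := mxrank_leqif_sup (addsmxSl U v).
rewrite ltn_neqAle le andbT eq; apply: contra nvU => /(submx_trans (addsmxSr U v)).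
done.
Qed.


Definition fam (U : 'M[F]_(n.+1)) k := [set W : {set V} | is_subspace k W & S U \subset W].

Lemma in_fam_uniq (U : 'M[F]_(n.+1)) (v : V) W :
  ~~ (v <= U)%MS -> W \in fam U (\rank U).+1 -> (v \in W) = (S (U + v)%MS == W).
Proof.
move=> nvU; rewrite inE => /andP[/subspaceP [Wm [rW ->]]]; rewrite subS => sUW.
apply/idP/eqP => [vW | <-]; last by rewrite inE addsmxSr.
apply: eqS; move: vW; rewrite inE => svW.
have sub : (U + v <= Wm)%MS by rewrite addsmx_sub sUW.
have [_ <-] := mxrank_leqif_eq sub.
by rewrite rank_adds_v // rW.
Qed.

Lemma card_fam (U : 'M[F]_(n.+1)) :
  (#|fam U (\rank U).+1| * (q ^ (\rank U).+1 - q ^ \rank U) = q ^ n.+1 - q ^ \rank U)%N.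
Proof.
have cardC : #|~: S U| = (q ^ n.+1 - q ^ \rank U)%N.
  by rewrite -card_V -(cardsC (S U)) card_S addKn.
apply/esym; rewrite -cardC -[#|~: S U|]sum1_card (partition_big (fun v => S (U + v)%MS) (mem (fam U (\rank U).+1))).
  rewrite -sum_nat_const; apply: eq_bigr => W WF.
  have : W \in fam U (\rank U).+1 by [].
  rewrite inE => /andP[/subspaceP [Wm [rW eW]] sUW].
  rewrite -[RHS](_ : #|W :\: S U| = _); last first.
    by rewrite cardsD (setIidPr sUW) eW !card_S rW.
  rewrite -sum1_card; apply: eq_bigl => v.
  rewrite !inE; case nvU: (v <= U)%MS => //=.
  by rewrite -(in_fam_uniq (negbT nvU) WF).
move=> v; rewrite !inE => nvU; apply/andP; split.
  by apply/subspaceP; exists (U + v)%MS; rewrite rank_adds_v.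
by rewrite subS addsmxSl.
Qed.

Lemma eqS_rank (X Y : 'M[F]_(n.+1)) : (X <= Y)%MS -> (\rank Y <= \rank X)%N -> S X = S Y.
Proof.
move=> sXY rYX; apply: eqS; have [le <-] := mxrank_leqif_eq sXY.
by rewrite eqn_leq le rYX.
Qed.

Lemma lines_through (v : V) : v != 0 ->
  (#|[set l : {set V} | is_line l & v \in l]| * (q ^ 2 - q) = q ^ n.+1 - q)%N.
Proof.
move=> nz.
have r1 : \rank <<v>>%MS = 1%N by rewrite genmxE rank_rV nz.
have -> : [set l : {set V} | is_line l & v \in l] = fam <<v>>%MS 2.
  apply/setP => l; rewrite !inE; apply: andb_id2l => /subspaceP [Wm [_ ->]].
  by rewrite subS genmxE inE.
by have := card_fam <<v>>%MS; rewrite r1 expn1.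
Qed.

Lemma planes_through (m : {set V}) : is_line m ->
  (#|[set P : {set V} | is_plane P & m \subset P]| * (q ^ 3 - q ^ 2) = q ^ n.+1 - q ^ 2)%N.
Proof.
case/subspaceP => M [rM ->].
have -> : [set P : {set V} | is_plane P & S M \subset P] = fam M 3.
  by apply/setP => P; rewrite !inE.
by have := card_fam M; rewrite rM.
Qed.

Lemma card_nz : #|[set v : V | v != 0]| = (q ^ n.+1 - 1)%N.
Proof.
have -> : [set v : V | v != 0] = ~: [set 0] by apply/setP => v; rewrite !inE.
by have := cardsC [set (0 : V)]; rewrite cards1 card_V => <-; rewrite addKn.
Qed.

Lemma card_line_nz (l : {set V}) : is_line l -> #|[set v in l | v != 0]| = (q ^ 2 - 1)%N.
Proof.
case/subspaceP => M [rM ->].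
have -> : [set v in S M | v != 0] = S M :\ 0 by apply/setP => v; rewrite !inE andbC.
by have := cardsD1 (0 : V) (S M); rewrite S0 card_S rM => ->; rewrite addKn.
Qed.

End Proj.

Lemma leq_sum_sub (I : finType) (A B : {pred I}) (g : I -> nat) :
  {subset B <= A} -> (\sum_(i in B) g i <= \sum_(i in A) g i)%N.
Proof.
move=> sBA; rewrite [X in (X <= _)%N]big_mkcond [X in (_ <= X)%N]big_mkcond.
by apply: leq_sum => i _; case: ifP => // /sBA ->.
Qed.

Lemma xchg (X Y : finType) (A : {pred X}) (B : {pred Y}) (R : X -> Y -> bool)
  (w : X -> Y -> nat) :
  (\sum_(x in A) \sum_(y in B | R x y) w x y = \sum_(y in B) \sum_(x in A | R x y) w x y)%N.
Proof.
rewrite (exchange_big_dep (fun y => y \in B)) //=; last by move=> x y _ /andP[].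
apply: eq_bigr => y yB; apply: eq_bigl => x; by rewrite yB.
Qed.

Lemma am2 (a b : nat) : (2 * (a * b) <= a ^ 2 + b ^ 2)%N.
Proof.
wlog h : a b / (b <= a)%N.
  move=> W; case: (leqP b a) => h; first exact: W.
  by rewrite [(a * b)%N]mulnC [(a ^ 2 + _)%N]addnC; apply: W; apply: ltnW.
rewrite -(subnK h); move: (a - b)%N => c.
rewrite sqrnD !mulnDl !mulnDr; lia.
Qed.

Lemma cauchy (I : finType) (A : {pred I}) (x : I -> nat) :
  ((\sum_(i in A) x i) ^ 2 <= #|A| * \sum_(i in A) x i ^ 2)%N.
Proof.
rewrite -(leq_pmul2l (isT : (0 < 2)%N)).
apply: (@leq_trans (\sum_(i in A) \sum_(j in A) (x i ^ 2 + x j ^ 2))).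
  rewrite -mulnn big_distrl big_distrr /=; apply: leq_sum => i _.
  rewrite big_distrr big_distrr /=; apply: leq_sum => j _; exact: am2.
rewrite mul2n -addnn; under eq_bigr do rewrite big_split /=.
rewrite big_split /= leq_add //.
  by rewrite big_distrr; apply: leq_sum => i _; rewrite sum_nat_const.
by rewrite sum_nat_const.
Qed.

Section Main.
Variables (F : finFieldType) (n : nat).
Local Notation V := (vec F n).
Local Notation q := #|F|.

Definition nzs : {set V} := [set v : V | v != 0].

Lemma sum_R (L : {set {set V}}) : (forall l, l \in L -> is_line l) ->
  (\sum_(v in nzs) #|[set l in L | v \in l]| = #|L| * (q ^ 2 - 1))%N.
Proof.
move=> hL.
transitivity (\sum_(v in nzs) \sum_(l in L | v \in l) 1)%N.
  by apply: eq_bigr => v _; rewrite sum1dep_card.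
rewrite (xchg _ _ (fun (v : V) (l : {set V}) => v \in l) (fun _ _ => 1%N)) -sum_nat_const.
apply: eq_bigr => l lL; rewrite sum1dep_card -(card_line_nz (hL l lL)).
by apply: eq_card => v; rewrite !inE andbC.
Qed.


Definition lines : {set {set V}} := [set l : {set V} | is_line l].

Variables (L : {set {set V}}) (hL : forall l, l \in L -> is_line l)
  (hcov : forall P : {set V}, is_plane P -> exists2 l, l \in L & l \subset P).

Definition R (v : V) := #|[set l in L | v \in l]|.

Lemma I1 (m : {set V}) : m \in lines :\: L ->
  (#|[set P : {set V} | is_plane P & m \subset P]| * (q - 1) <= \sum_(v in nzs | v \in m) R v)%N.
Proof.
case/setDP; rewrite inE => mline mL.
have [M [rM em]] := subspaceP _ _ mline.
set Pl := [set P : {set V} | is_plane P & m \subset P].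
pose c (P : {set V}) := odflt set0 [pick l in L | l \subset P].
have cP : forall P, P \in Pl -> c P \in L /\ c P \subset P.
  move=> P; rewrite inE => /andP[pl _]; rewrite /c; case: pickP => [l /andP[? ?] | none] //=.
  by have [l lL lP] := hcov pl; have := none l; rewrite lL lP.
set Am := [set v in nzs | v \in m].
rewrite (eq_bigl (fun v => v \in Am)); last by move=> v; rewrite !inE.
rewrite -sum_nat_const.
apply: (@leq_trans (\sum_(P in Pl) #|[set v in Am | v \in c P]|)%N).
  apply: leq_sum => P PPl.
  have [cL cPP] := cP P PPl.
  have [Cm [rC eC]] := subspaceP _ _ (hL cL).
  move: PPl; rewrite inE => /andP[/subspaceP [Pm [rP eP]] mP].
  rewrite eC eP subS in cPP; rewrite em eP subS in mP.
  have -> : [set v in Am | v \in c P] = S (M :&: Cm)%MS :\ 0.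
    by apply/setP => v; rewrite !inE eC em !inE sub_capmx andbA.
  have h := cardsD1 (0 : V) (S (M :&: Cm)%MS); rewrite S0 card_S /= in h.
  have r1 : (1 <= \rank (M :&: Cm)%MS)%N.
    have := mxrank_sum_cap M Cm; rewrite rM rC.
    have : (\rank (M + Cm)%MS <= 3)%N by rewrite -rP mxrankS // addsmx_sub mP.
    lia.
  have : (q ^ 1 <= q ^ \rank (M :&: Cm)%MS)%N.
    by rewrite leq_pexp2l // ltnW // card_finNzRing_gt1.
  by rewrite expn1 h leq_subLR.
have inj : {in Pl &, injective c}.
  move=> P1 P2 P1l P2l ec.
  have [cL cP1] := cP P1 P1l; have [_ cP2] := cP P2 P2l; rewrite -ec in cP2.
  have [Cm [rC eC]] := subspaceP _ _ (hL cL).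
  move: P1l P2l; rewrite !inE => /andP[/subspaceP [P1m [rP1 eP1]] mP1] /andP[/subspaceP [P2m [rP2 eP2]] mP2].
  rewrite eC eP1 subS in cP1; rewrite em eP1 subS in mP1.
  rewrite eC eP2 subS in cP2; rewrite em eP2 subS in mP2.
  have r3 : (3 <= \rank (M + Cm)%MS)%N.
    rewrite leqNgt; apply/negP => r2.
    have e1 := eqS_rank (addsmxSl M Cm) (_ : (\rank (M + Cm)%MS <= \rank M)%N).
    have e2 := eqS_rank (addsmxSr M Cm) (_ : (\rank (M + Cm)%MS <= \rank Cm)%N).
    move: mL; rewrite em e1 ?rM // -e2 ?rC // -eC cL //.
  rewrite eP1 eP2 -(eqS_rank (_ : (M + Cm <= P1m)%MS)) ?addsmx_sub ?mP1 ?cP1 ?rP1 //.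
  by rewrite -(eqS_rank (_ : (M + Cm <= P2m)%MS)) ?addsmx_sub ?mP2 ?cP2 ?rP2.
rewrite -[X in (X <= _)%N](big_imset (fun l : {set V} => #|[set v in Am | v \in l]|) inj) /=.
apply: (@leq_trans (\sum_(l in L) #|[set v in Am | v \in l]|)%N).
  apply: leq_sum_sub => l /imsetP [P PPl ->]; exact: (cP P PPl).1.
rewrite /R; under [X in (_ <= X)%N]eq_bigr do rewrite -sum1dep_card.
rewrite (xchg _ _ (fun (v : V) (l : {set V}) => v \in l) (fun _ _ => 1%N)).
by apply: eq_leq; apply: eq_bigr => l _; rewrite sum1dep_card.
Qed.


Lemma q_gt1 : (1 < q)%N.
Proof. exact: card_finNzRing_gt1. Qed.

Definition acnt := ((q ^ n.+1 - q ^ 2) %/ (q ^ 3 - q ^ 2))%N.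
Definition bcnt := ((q ^ n.+1 - q) %/ (q ^ 2 - q))%N.

Lemma pl_cnt (m : {set V}) : is_line m ->
  #|[set P : {set V} | is_plane P & m \subset P]| = acnt.
Proof.
move=> ml; rewrite /acnt -(planes_through ml) mulnK // subn_gt0 ltn_exp2l //; exact: q_gt1.
Qed.

Lemma ln_cnt (v : V) : v != 0 -> #|[set l in lines | v \in l]| = bcnt.
Proof.
move=> nz; rewrite /bcnt -(lines_through nz).
have -> : [set l in lines | v \in l] = [set l : {set V} | is_line l & v \in l].
  by apply/setP => l; rewrite !inE.
rewrite mulnK // subn_gt0 -{1}(expn1 q) ltn_exp2l //; exact: q_gt1.
Qed.

Lemma acnt_eq : (1 <= n)%N -> (acnt * (q ^ 3 - q ^ 2) = q ^ n.+1 - q ^ 2)%N.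
Proof.
move=> n1.
have ml : is_line (S (pid_mx 2 : 'M[F]_(n.+1))).
  by apply/subspaceP; exists (pid_mx 2); rewrite rank_pid_mx.
by rewrite -(pl_cnt ml) planes_through.
Qed.

Lemma bcnt_eq : (bcnt * (q ^ 2 - q) = q ^ n.+1 - q)%N.
Proof.
have nz : (pid_mx 1 : 'rV[F]_(n.+1)) != 0.
  by rewrite -mxrank_eq0 rank_pid_mx.
by rewrite -(ln_cnt nz) (_ : [set l in lines | _ \in l] = [set l : {set V} | is_line l & pid_mx 1 \in l]) ?lines_through //; apply/setP => l; rewrite !inE.
Qed.


Lemma I12 : (#|lines :\: L| * (acnt * (q - 1)) + \sum_(v in nzs) R v ^ 2
              <= bcnt * \sum_(v in nzs) R v)%N.
Proof.
have step1 : (#|lines :\: L| * (acnt * (q - 1)) <= \sum_(v in nzs) R v * (bcnt - R v))%N.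
  rewrite -sum_nat_const.
  apply: (@leq_trans (\sum_(m in lines :\: L) \sum_(v in nzs | v \in m) R v)%N).
    apply: leq_sum => m mlL.
    have ml : is_line m by move: mlL; rewrite !inE => /andP[_].
    by rewrite -(pl_cnt ml); exact: I1.
  rewrite (xchg _ _ (fun (m : {set V}) (v : V) => v \in m) (fun _ v => R v)).
  apply: eq_leq; apply: eq_bigr => v vnz.
  rewrite sum_nat_cond_const mulnC; congr (_ * _)%N.
  have sub : [set l in L | v \in l] \subset [set l in lines | v \in l].
    by apply/subsetP => l; rewrite !inE => /andP[lL ->]; rewrite hL.
  have -> : [set x | (x \in lines :\: L) && (v \in x)] =
            [set l in lines | v \in l] :\: [set l in L | v \in l].
    by apply/setP => l; rewrite !inE; case: (v \in l); rewrite ?andbT ?andbF.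
  rewrite cardsD (setIidPr sub) ln_cnt //; by move: vnz; rewrite inE.
have Rle : forall v, v \in nzs -> (R v <= bcnt)%N.
  move=> v vnz; rewrite -(ln_cnt (_ : v != 0)); last by move: vnz; rewrite inE.
  apply: subset_leq_card; apply/subsetP => l; rewrite !inE => /andP[lL ->].
  by rewrite hL.
rewrite big_distrr /=.
apply: (@leq_trans (\sum_(v in nzs) (R v * (bcnt - R v) + R v ^ 2))%N).
  by rewrite big_split /= leq_add2r.
apply: eq_leq; apply: eq_bigr => v vnz.
by rewrite mulnBr -mulnn subnK ?leq_mul2l ?Rle ?orbT // mulnC.
Qed.

End Main.

Lemma alg (q X l Lam T a b : rat) : 1 < q -> 0 <= a ->
  a * (q ^+ 3 - q ^+ 2) = q ^+ 2 * X - q ^+ 2 ->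
  b * (q ^+ 2 - q) = q ^+ 2 * X - q ->
  Lam * (q ^+ 2 - 1) = (q ^+ 2 * X - 1) * b ->
  l <= Lam ->
  (Lam - l) * (a * (q - 1)) + T <= b * (l * (q ^+ 2 - 1)) ->
  (l * (q ^+ 2 - 1)) ^+ 2 <= (q ^+ 2 * X - 1) * T ->
  ((q ^+ 2 * X - 1) * (X - 1)) / ((q ^+ 2 - 1) ^+ 2) <= l.
Proof.
move=> q1 a0 ha hb hL lL H1 H2.
have q10 : q - 1 != 0 by rewrite subr_eq0; apply/eqP => e; move: q1; rewrite e ltxx.
have q0 : q != 0 by apply/eqP => e; move: q1; rewrite e ltr10.
have qp0 : q + 1 != 0 by apply/eqP => e; move: q1; lra.
have q2 : q ^+ 2 != 0 by rewrite expf_neq0.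
have eX : X = a * (q - 1) + 1.
  apply: (mulfI q2); rewrite mulrDr mulr1; apply/eqP; rewrite -subr_eq; apply/eqP.
  by rewrite -ha; ring.
subst X.
have eb : b = q * a + 1.
  apply: (mulIf (mulf_neq0 q0 q10)); rewrite (_ : q * (q - 1) = q ^+ 2 - q); last ring.
  by rewrite hb; ring.
subst b.
set c := q ^+ 2 * a + q + 1.
have eLam : Lam = c * (q * a + 1) / (q + 1).
  have h : Lam * (q ^+ 2 - 1) = c * (q * a + 1) * (q - 1) by rewrite hL /c; ring.
  have q21 : q ^+ 2 - 1 != 0.
    by rewrite (_ : q ^+ 2 - 1 = (q - 1) * (q + 1)) ?mulf_neq0 //; ring.
  by apply: (mulIf q21); rewrite h; field.
subst Lam.
have c0 : 0 < c by rewrite /c; nra.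
set u := l * (q + 1) ^+ 2 - c * a.
set w := c * (q * a + 1) - (q + 1) * l.
have E : (q - 1) ^+ 2 * (u * w) =
   (q - 1) * c * (q + 1) * ((q * a + 1) * (l * (q ^+ 2 - 1)) -
        ((c * (q * a + 1) / (q + 1) - l) * (a * (q - 1)) + T))
   + (q + 1) * ((q ^+ 2 * (a * (q - 1) + 1) - 1) * T - (l * (q ^+ 2 - 1)) ^+ 2).
  rewrite /u /w /c; field; done.
have uw : 0 <= u * w.
  have h : 0 <= (q - 1) ^+ 2 * (u * w).
    rewrite E; apply: addr_ge0; apply: mulr_ge0.
    - rewrite mulr_ge0 // ?mulr_ge0 //; lra.
    - lra.
    - lra.
    - lra.
  by rewrite pmulr_rge0 // in h; rewrite exprn_gt0 //; lra.
have w0 : 0 <= w.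
  rewrite /w (_ : c * (q * a + 1) - (q + 1) * l = (q + 1) * (c * (q * a + 1) / (q + 1) - l)); last by field.
  rewrite mulr_ge0 //; lra.
have u0 : 0 <= u.
  case: (ltrP 0 w) => [wp | wn].
    by rewrite -(pmulr_lge0 _ wp).
  have ew : w = 0 by apply/eqP; rewrite eq_le wn w0.
  have el : l = c * (q * a + 1) / (q + 1).
    by move: ew; rewrite /w => /eqP; rewrite subr_eq0 => /eqP ->; field.
  rewrite /u el (_ : c * (q * a + 1) / (q + 1) * (q + 1) ^+ 2 - c * a =
     c * ((q * a + 1) * (q + 1) - a)); last by field.
  apply: mulr_ge0; first lra.
  nra.
rewrite ler_pdivrMr; last by rewrite exprn_gt0 //; nra.
rewrite /u in u0.
rewrite (_ : (q ^+ 2 * (a * (q - 1) + 1) - 1) * (a * (q - 1) + 1 - 1) = (c * a) * (q - 1) ^+ 2); last by rewrite /c; ring.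
rewrite (_ : (q ^+ 2 - 1) ^+ 2 = (q + 1) ^+ 2 * (q - 1) ^+ 2); last by ring.
have qq : 0 < (q - 1) ^+ 2 by rewrite exprn_gt0 //; lra.
rewrite mulrA; nra.
Qed.


Section Final.
Variables (F : finFieldType) (n : nat).
Local Notation V := (vec F n).
Local Notation q := #|F|.

Hypothesis n2 : (2 <= n)%N.

Let Q : rat := q%:R.
Let X : rat := (q ^ n.-1)%:R.

Lemma X2 : (q ^ n.+1 = q ^ 2 * q ^ n.-1)%N.
Proof. by rewrite -expnD; congr (_ ^ _)%N; lia. Qed.

Lemma qgt1 : (1 < q)%N. Proof. exact: q_gt1. Qed.

Lemma Xgt0 : (0 < q ^ n.-1)%N. Proof. by rewrite expn_gt0 ltnW // qgt1. Qed.

Lemma Fa : (acnt F n)%:R * (Q ^+ 3 - Q ^+ 2) = Q ^+ 2 * X - Q ^+ 2.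
Proof.
have l1 : (q ^ 2 <= q ^ 3)%N by rewrite leq_pexp2l // ltnW // qgt1.
have l2 : (q ^ 2 <= q ^ 2 * q ^ n.-1)%N by rewrite leq_pmulr // Xgt0.
have h : (((acnt F n) * (q ^ 3 - q ^ 2))%:R : rat) = (q ^ n.+1 - q ^ 2)%:R by rewrite acnt_eq // ltnW.
rewrite X2 natrM (natrB _ l1) (natrB _ l2) !natrM !natrX in h.
by rewrite /Q /X h natrX.
Qed.

Lemma Fb : (bcnt F n)%:R * (Q ^+ 2 - Q) = Q ^+ 2 * X - Q.
Proof.
have l1 : (q <= q ^ 2)%N by rewrite -{1}(expn1 q) leq_pexp2l // ltnW // qgt1.
have l2 : (q <= q ^ 2 * q ^ n.-1)%N by rewrite (leq_trans l1) // leq_pmulr // Xgt0.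
have h : (((bcnt F n) * (q ^ 2 - q))%:R : rat) = (q ^ n.+1 - q)%:R by rewrite bcnt_eq.
rewrite X2 natrM (natrB _ l1) (natrB _ l2) !natrM !natrX in h.
by rewrite /Q /X h natrX.
Qed.

Lemma Lam_nat : (#|lines F n| * (q ^ 2 - 1) = (q ^ n.+1 - 1) * bcnt F n)%N.
Proof.
rewrite -(sum_R (L := lines F n)); last by move=> l; rewrite inE.
rewrite -card_nz -sum_nat_const; apply: eq_bigr => v; rewrite inE => nz.
exact: ln_cnt.
Qed.

Lemma FL : (#|lines F n|)%:R * (Q ^+ 2 - 1) = (Q ^+ 2 * X - 1) * (bcnt F n)%:R.
Proof.
have l1 : (1 <= q ^ 2)%N by rewrite expn_gt0 ltnW // qgt1.
have l2 : (1 <= q ^ 2 * q ^ n.-1)%N by rewrite muln_gt0 expn_gt0 Xgt0 ltnW // qgt1.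
have h : ((#|lines F n| * (q ^ 2 - 1))%:R : rat) = ((q ^ n.+1 - 1) * bcnt F n)%:R by rewrite Lam_nat.
rewrite X2 !natrM (natrB _ l1) (natrB _ l2) !natrM !natrX in h.
by rewrite /Q /X h natrX.
Qed.

Definition gval : rat :=
  ((q ^ n.+1 - 1) * (q ^ n.-1 - 1))%:R / ((q ^ 2 - 1) ^ 2)%:R.

Lemma gval_eq : gval = ((Q ^+ 2 * X - 1) * (X - 1)) / ((Q ^+ 2 - 1) ^+ 2).
Proof.
have l1 : (1 <= q ^ 2)%N by rewrite expn_gt0 ltnW // qgt1.
have l2 : (1 <= q ^ 2 * q ^ n.-1)%N by rewrite muln_gt0 expn_gt0 Xgt0 ltnW // qgt1.
have l3 : (1 <= q ^ n.-1)%N by rewrite Xgt0.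
rewrite /gval X2 natrM natrX (natrB _ l1) (natrB _ l2) (natrB _ l3) !natrM !natrX.
by rewrite /Q /X natrX.
Qed.

Lemma bound_lines : gval <= (#|lines F n|)%:R.
Proof.
rewrite gval_eq.
apply: (@alg Q X _ _ ((bcnt F n)%:R * ((#|lines F n|)%:R * (Q ^+ 2 - 1))) (acnt F n)%:R (bcnt F n)%:R).
- by rewrite ltr1n qgt1.
- exact: ler0n.
- exact: Fa.
- exact: Fb.
- exact: FL.
- done.
- by rewrite subrr mul0r add0r.
- by rewrite expr2 {1}FL -mulrA.
Qed.

Lemma bound_cover (L : {set {set V}}) (hL : forall l, l \in L -> is_line l)
  (hcov : forall P : {set V}, is_plane P -> exists2 l, l \in L & l \subset P) :
  gval <= (#|L|)%:R.
Proof.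
have Lsub : L \subset lines F n by apply/subsetP => l lL; rewrite inE hL.
have hI := I12 hL hcov.
rewrite (sum_R hL) in hI.
have hC := cauchy (nzs F n) (R L).
rewrite (sum_R hL) card_nz in hC.
have ecard : #|lines F n :\: L| = (#|lines F n| - #|L|)%N.
  by rewrite cardsD (setIidPr Lsub).
rewrite ecard in hI.
have leL : (#|L| <= #|lines F n|)%N by apply: subset_leq_card.
rewrite gval_eq.
apply: (@alg Q X _ (#|lines F n|)%:R (\sum_(v in nzs F n) R L v ^ 2)%N%:R (acnt F n)%:R (bcnt F n)%:R).
- by rewrite ltr1n qgt1.
- exact: ler0n.
- exact: Fa.
- exact: Fb.
- exact: FL.
- by rewrite ler_nat.
- have lq1 : (1 <= q)%N by rewrite ltnW // qgt1.
  have lq2 : (1 <= q ^ 2)%N by rewrite expn_gt0 ltnW // qgt1.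
  move: hI; rewrite -(@ler_nat rat) natrD !natrM (natrB _ leL) (natrB _ lq1) (natrB _ lq2) natrX.
  by rewrite /Q.
- have lq2 : (1 <= q ^ 2)%N by rewrite expn_gt0 ltnW // qgt1.
  have l2 : (1 <= q ^ 2 * q ^ n.-1)%N by rewrite muln_gt0 expn_gt0 Xgt0 ltnW // qgt1.
  move: hC; rewrite X2 -(@ler_nat rat) !natrM (natrB _ lq2) (natrB _ l2) !natrM !natrX expr2.
  by rewrite /Q /X natrX.
Qed.

End Final.

Local Close Scope ring_scope.

Theorem lemma4p3 (F : finFieldType) (n : nat) : (2 <= n)%N ->
  let q := #|F| in
  ((((q ^ n.+1 - 1) * (q ^ n.-1 - 1))%:R / ((q ^ 2 - 1) ^ 2)%:R : rat)
     <= (f F n)%:R)%R.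
Proof.
move=> n2; cbv zeta.
have := bound_lines F n2; have := @bound_cover F n n2.
rewrite /gval /f /arg_min /extremum.
case: pickP => [L /andP[cov _] | _] /= hc hl; last by [].
move: cov; rewrite /covers_planes => /andP[/forall_inP hL /forall_inP hcov].
apply: hc => [l /hL // | P /hcov /exists_inP [l lL lP]].
by exists l.
Qed.
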